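(* Let $k$ be a finite field and $n\geq 2$. Then the kernel of the natural homomorphism $\mathrm{BCr}_n(k)\to\mathrm{Sym}(\mathbb{P}^n(k))$ is not a normal subgroup of $\mathrm{Cr}_n(k)$.
   Context: $\mathrm{Cr}_n(k)$ is the group of birational self-maps of $\mathbb{P}^n$ defined over $k$, and $\mathrm{BCr}_n(k)$ is the subgroup of those $f$ such that both $f$ and $f^{-1}$ are defined at every point of $\mathbb{P}^n(k)$; the natural homomorphism sends such $f$ to the permutation it induces on $\mathbb{P}^n(k)$. *)

(* Defs.v *)
From HB Require Import structures.
From mathcomp Require Import all_boot all_algebra.
From mathcomp Require Import mpoly.
Set Implicit Arguments. Unset Strict Implicit. Unset Printing Implicit Defensive.
Import GRing.Theory.
Local Open Scope ring_scope.

(* Rational self-maps of P^(m-1) over a field k are represented by m-tuples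
   of homogeneous polynomials of a common degree in m variables x_0..x_{m-1}
   (homogeneous coordinates).  Here m = n+1 for P^n. *)

Definition ratmap (k : fieldType) (m : nat) := m.-tuple {mpoly k[m]}.

Definition homog_map (k : fieldType) (m : nat) (F : ratmap k m) : Prop :=
  exists d : nat, forall i : 'I_m, tnth F i \is d.-homog.

Definition nonzero_map (k : fieldType) (m : nat) (F : ratmap k m) : Prop :=
  exists i : 'I_m, tnth F i != 0.

Definition equiv_map (k : fieldType) (m : nat) (F G : ratmap k m) : Prop :=
  [/\ nonzero_map F, nonzero_map G &
      forall i j : 'I_m, tnth F i * tnth G j = tnth F j * tnth G i].

Definition comp_map (k : fieldType) (m : nat) (F G : ratmap k m) : ratmap k m :=
  [tuple (tnth F i \mPo G) | i < m].

Definition id_map (k : fieldType) (m : nat) : ratmap k m :=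
  [tuple 'X_i | i < m].

Definition is_inverse (k : fieldType) (m : nat) (F G : ratmap k m) : Prop :=
  [/\ homog_map G, equiv_map (comp_map G F) (id_map k m)
    & equiv_map (comp_map F G) (id_map k m)].

Definition birational (k : fieldType) (m : nat) (F : ratmap k m) : Prop :=
  homog_map F /\ exists G, is_inverse F G.

(* k-points of P^(m-1): nonzero coordinate vectors (up to scalars) *)
Definition kpoint (k : fieldType) (m : nat) (v : 'I_m -> k) : Prop :=
  exists i : 'I_m, v i != 0.

Definition eval_map (k : fieldType) (m : nat) (F : ratmap k m) (v : 'I_m -> k)
  : 'I_m -> k := fun i => (tnth F i).@[v].

Definition defined_at (k : fieldType) (m : nat) (F : ratmap k m)
  (v : 'I_m -> k) : Prop :=
  exists G : ratmap k m, [/\ homog_map G, equiv_map F G & kpoint (eval_map G v)].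

Definition fixes_point (k : fieldType) (m : nat) (F : ratmap k m)
  (v : 'I_m -> k) : Prop :=
  forall G : ratmap k m, homog_map G -> equiv_map F G -> kpoint (eval_map G v) ->
    forall i j : 'I_m, eval_map G v i * v j = eval_map G v j * v i.

Definition in_BCr (k : fieldType) (m : nat) (F : ratmap k m) : Prop :=
  [/\ birational F,
      (forall v, kpoint v -> defined_at F v) &
      exists Fi, is_inverse F Fi /\ (forall v, kpoint v -> defined_at Fi v)].

Definition in_BCr_kernel (k : fieldType) (m : nat) (F : ratmap k m) : Prop :=
  in_BCr F /\ (forall v, kpoint v -> fixes_point F v).

(* Main.v *)
Require Import Defs.
From mathcomp Require Import all_boot all_algebra.
From mathcomp Require Import mpoly.
From mathcomp Require Import all_field fingroup cyclic ring zify.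
Set Implicit Arguments. Unset Strict Implicit. Unset Printing Implicit Defensive.
Import GRing.Theory.
Local Open Scope ring_scope.

Section Gen.
Variable n' : nat.
Local Notation m := n'.+3.
Definition i0 : 'I_m := Ordinal (isT : (0 < m)%N).
Definition i1 : 'I_m := Ordinal (isT : (1 < m)%N).
Definition i2 : 'I_m := Ordinal (isT : (2 < m)%N).

Variable R : comNzRingType.
Implicit Types (c a b s t : R) (x y : 'I_m -> R).

Definition Nrm c a b := a ^+ 2 + a * b - c * b ^+ 2.
Definition qf c x := x i0 ^+ 2 + x i0 * x i1 - c * x i1 ^+ 2.
Definition Fe c a b x (i : 'I_m) : R :=
  match val i with
  | 0 => (a ^+ 2 + c * b ^+ 2) * x i0 + c * (a * b *+ 2 + b ^+ 2) * x i1
  | 1 => (a * b *+ 2 + b ^+ 2) * x i0 + (a ^+ 2 + c * b ^+ 2 + (a * b *+ 2 + b ^+ 2)) * x i1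
  | _ => Nrm c a b * x i
  end.
Definition ge x (i : 'I_m) : R :=
  match val i with
  | 0 => x i1 * (x i2 - x i0)
  | 1 => x i0 * (x i2 - x i0)
  | 2 => x i0 * x i1
  | _ => x i * (x i2 - x i0)
  end.
Definition gie x (i : 'I_m) : R :=
  match val i with
  | 0 => x i1 * x i2
  | 1 => x i0 * x i2
  | 2 => x i1 * x i2 + x i0 * x i1
  | _ => x i * x i2
  end.
Fixpoint Arec (Q : nat) s x (j : nat) : R :=
  match j with
  | 0 => s
  | j'.+1 => let a := Arec Q s x j' in
             let b := x (inord j'.+2) ^+ (2 * Q ^ j') in
             a ^+ Q - a * b ^+ Q.-1 + b ^+ Q
  end.
Definition Ae Q s x := Arec Q s x n'.+1 ^+ 2.
Definition Be Q J s x := s * x i2 ^+ J * (s ^+ Q.-1 - (x i2 ^+ 2) ^+ Q.-1).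
Definition del c x := x i1 * x i2 ^+ 2 - c * x i0 * x i2 ^+ 2 - x i1 ^+ 2 * x i2 *+ 2 - x i0 * x i1 ^+ 2.
(* the reduced conjugate *)
Definition F1e c a be x := (a * be *+ 2 + x i0 * be ^+ 2) * (x i1 * x i2)
   + (a ^+ 2 + c * x i0 ^+ 2 * be ^+ 2 + a * x i0 * be *+ 2 + x i0 ^+ 2 * be ^+ 2) * x i2.
Definition F2e c a be x := (a * be - c * x i0 * be ^+ 2 *+ 2) * (x i1 * x i2)
   + Nrm c a (x i0 * be) * x i1 - c * x i0 * be * (a *+ 2 + x i0 * be) * x i2.
Definition Ge c a be x (i : 'I_m) : R :=
  match val i with
  | 0 => x i0 * F1e c a be x * F2e c a be x
  | 1 => Fe c a (x i0 * be) (gie x) i0 * F2e c a be x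
  | 2 => Fe c a (x i0 * be) (gie x) i0 * F1e c a be x
  | _ => Fe c a (x i0 * be) (gie x) i * F2e c a be x
  end.

Ltac ocase i := let j := fresh "j" in let Hj := fresh "Hj" in
  case: i => [[|[|[|j]]] Hj];
  [ have -> : Ordinal Hj = i0 by apply: val_inj
  | have -> : Ordinal Hj = i1 by apply: val_inj
  | have -> : Ordinal Hj = i2 by apply: val_inj
  | idtac ].

Lemma qf_Fe c a b x : qf c (Fe c a b x) = Nrm c a b ^+ 2 * qf c x.
Proof. rewrite /qf /Fe /Nrm /=. ring. Qed.

Lemma Nrm_conj c a b : Nrm c (a + b) (- b) = Nrm c a b.
Proof. rewrite /Nrm. ring. Qed.

Lemma Fe_fif c a b t x i :
  Fe c (t * a + t * b) (- (t * b)) (Fe c a b x) i = (t ^+ 2 * Nrm c a b ^+ 2) * x i.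
Proof. ocase i; rewrite /Fe /Nrm /=; ring. Qed.

Lemma Fe_ffi c a b t x i :
  Fe c (t * a) (t * b) (Fe c (a + b) (- b) x) i = (t ^+ 2 * Nrm c a b ^+ 2) * x i.
Proof. ocase i; rewrite /Fe /Nrm /=; ring. Qed.

Lemma gie_ge x i : gie (ge x) i = (x i0 * x i1 * (x i2 - x i0)) * x i.
Proof. ocase i; rewrite /gie /ge /=; ring. Qed.

Lemma ge_gie x i : ge (gie x) i = (x i0 * x i1 * x i2) * x i.
Proof. ocase i; rewrite /gie /ge /=; ring. Qed.

Lemma qf_gie_del c x : qf c (gie x) - (gie x i2) ^+ 2 = x i0 * del c x.
Proof. rewrite /qf /gie /del /=; ring. Qed.

Lemma ge_Ge c a be x i :
  ge (Fe c a (x i0 * be) (gie x)) i = x i0 * Ge c a be x i.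
Proof. ocase i; rewrite /ge /Ge /Fe /F1e /F2e /gie /Nrm /=; ring. Qed.

Lemma Fe_ge2 c a b x i : (2 <= val i)%N -> Fe c a b x i = Nrm c a b * x i.
Proof. by rewrite /Fe; case: (val i) => [|[|]]. Qed.

Lemma Dscale (T a X : R) Q' :
  (T * a) ^+ Q'.+1 - T * a * (T * X) ^+ Q' + (T * X) ^+ Q'.+1
  = T ^+ Q'.+1 * (a ^+ Q'.+1 - a * X ^+ Q' + X ^+ Q'.+1).
Proof. rewrite !exprMn !exprS; ring. Qed.

Lemma Arec_scale Q t s x y j : (0 < Q)%N ->
  (forall l, (2 <= l)%N -> (l < m)%N -> y (inord l) = t * x (inord l)) ->
  (j <= n'.+1)%N ->
  Arec Q (t ^+ 2 * s) y j = t ^+ (2 * Q ^ j) * Arec Q s x j.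
Proof.
move=> Q0 Hy; elim: j => [|j IH] Hj /=; first by rewrite expn0.
rewrite IH ?(ltnW Hj) // Hy //; try lia.
have E : t ^+ (2 * Q ^ j.+1) = (t ^+ (2 * Q ^ j)) ^+ Q.
  by rewrite -exprM expnS mulnCA mulnC.
rewrite E [(t * _) ^+ _]exprMn.
clear IH Hy E; case: Q Q0 => // Q' _ /=; exact: Dscale.
Qed.

Lemma Be_scale Q J t s x y : (0 < Q)%N -> y i2 = t * x i2 ->
  Be Q J (t ^+ 2 * s) y = t ^+ (2 * Q + J) * Be Q J s x.
Proof.
move=> Q0 Hy; rewrite /Be Hy.
case: Q Q0 => // Q' _ /=.
have E : t ^+ (2 * Q'.+1 + J) = t ^+ 2 * t ^+ J * (t ^+ 2) ^+ Q'.
  by rewrite -exprM -!exprD; congr (_ ^+ _); lia.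
rewrite E !exprMn; ring.
Qed.

End Gen.

Ltac rmo := repeat first [rewrite rmorphXn | rewrite rmorphMn | rewrite rmorphD
  | rewrite rmorphB | rewrite rmorphN | rewrite rmorphM].

Section Morph.
Variable n' : nat.
Local Notation m := n'.+3.
Variables R S : comNzRingType.
Variable phi : {rmorphism R -> S}.
Implicit Types (c a b s t : R) (x : 'I_m -> R) (y : 'I_m -> S).

Lemma Nrm_morph c a b : phi (Nrm c a b) = Nrm (phi c) (phi a) (phi b).
Proof. by rewrite /Nrm; rmo. Qed.

Lemma qf_morph c x y : (forall j, phi (x j) = y j) -> phi (qf c x) = qf (phi c) y.
Proof. by move=> H; rewrite /qf; rmo; rewrite !H. Qed.

Lemma Fe_morph c a b x y i : (forall j, phi (x j) = y j) ->
  phi (Fe c a b x i) = Fe (phi c) (phi a) (phi b) y i.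
Proof.
move=> H; rewrite /Fe; case: (val i) => [|[|j]];
  by rewrite ?Nrm_morph; rmo; rewrite !H.
Qed.

Lemma ge_morph x y i : (forall j, phi (x j) = y j) -> phi (ge x i) = ge y i.
Proof.
move=> H; rewrite /ge; case: (val i) => [|[|[|j]]];
  by rmo; rewrite !H.
Qed.

Lemma gie_morph x y i : (forall j, phi (x j) = y j) -> phi (gie x i) = gie y i.
Proof.
move=> H; rewrite /gie; case: (val i) => [|[|[|j]]];
  by rmo; rewrite !H.
Qed.

Lemma Arec_morph Q s x y j : (forall j, phi (x j) = y j) ->
  phi (Arec Q s x j) = Arec Q (phi s) y j.
Proof.
move=> H; elim: j => [|j IH] //=.
by rmo; rewrite IH H.
Qed.

Lemma Ae_morph Q s x y : (forall j, phi (x j) = y j) ->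
  phi (Ae Q s x) = Ae Q (phi s) y.
Proof. by move=> H; rewrite /Ae rmorphXn (Arec_morph _ _ _ H). Qed.

Lemma Be_morph Q J s x y : (forall j, phi (x j) = y j) ->
  phi (Be Q J s x) = Be Q J (phi s) y.
Proof. by move=> H; rewrite /Be; rmo; rewrite !H. Qed.

End Morph.

Section FF.
Variable k : finFieldType.
Local Notation Q := #|k|.

Lemma Q_gt1 : (1 < Q)%N.
Proof. exact: finNzRing_gt1. Qed.

Lemma Qk0 : (Q%:R : k) = 0.
Proof.
have := @expg_cardG _ [set: k] (1%R:k) (in_setT _).
by rewrite cardsT FinRing.zmodXgE.
Qed.

Lemma expQ1 (x : k) : x != 0 -> x ^+ Q.-1 = 1.
Proof.
move=> nz; have := expf_card x; rewrite -(prednK (ltnW Q_gt1)) exprS.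
by move=> /(congr1 (fun y => x^-1 * y)); rewrite mulrA mulVf // mul1r.
Qed.

Lemma D0 (a b : k) : a ^+ Q - a * b ^+ Q.-1 + b ^+ Q = 0 -> a = 0 /\ b = 0.
Proof.
rewrite !expf_card; have [->|nzb] := eqVneq b 0.
  by rewrite expr0n /= -(subnKC Q_gt1) /= mulr0 subr0 addr0.
by rewrite expQ1 // mulr1 subrr add0r => E; rewrite E eqxx in nzb.
Qed.

Lemma Arec_zero n' s (x : 'I_n'.+3 -> k) j :
  Arec Q s x j = 0 -> s = 0 /\ (forall l, (2 <= l)%N -> (l <= j.+1)%N -> x (inord l) = 0).
Proof.
elim: j => [|j IH] /=; first by move=> ->; split => // l H1 H2; lia.
move=> /D0 [/IH [-> H] /eqP]; rewrite expf_eq0 => /andP [_ /eqP Hx]; split => // l H1 H2.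
have [/eqP El|] := boolP (l == j.+2); first by rewrite El.
move=> Hl; apply: H => //; lia.
Qed.

Lemma exists_aniso : exists c : k, forall u : k, u ^+ 2 - u != c.
Proof.
have : [exists c : k, [forall u : k, u ^+ 2 - u != c]].
  apply: contraT; rewrite negb_exists => /forallP H.
  pose phi := fun u : k => u ^+ 2 - u.
  have Hs : forall c, c \in codom phi.
    move=> c; have := H c; rewrite negb_forall => /existsP [u]; rewrite negbK => /eqP E.
    by apply/codomP; exists u.
  have : #|image phi k| == #|k|.
    rewrite eqn_leq leq_image_card /=; apply: subset_leq_card; apply/subsetP => c _.
    exact: Hs.
  move=> /image_injP inj.
  have : phi 0 = phi 1 by rewrite /phi; ring.
  move=> /inj; rewrite !inE => /(_ isT isT) /eqP; rewrite eq_sym oner_eq0 //.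
move=> /existsP [c /forallP H]; exists c => u; exact: H.
Qed.

Lemma qf_aniso n' c (Hc : forall u : k, u ^+ 2 - u != c) (v : 'I_n'.+3 -> k) :
  qf c v = 0 -> v (i0 n') = 0 /\ v (i1 n') = 0.
Proof.
rewrite /qf => E.
have [H1|H1] := eqVneq (v (i1 n')) 0.
  have : v (i0 n') ^+ 2 = 0 by rewrite -E H1; ring.
  by move=> /eqP; rewrite expf_eq0 /= => /eqP.
exfalso; move: (Hc (- (v (i0 n') / v (i1 n')))) => /eqP; apply.
apply: (mulIf (expf_neq0 2 H1)); move: E => /eqP; rewrite subr_eq0 => /eqP E.
rewrite mulrBl -E; field; exact H1.
Qed.

End FF.

Section Hom.
Variable k : fieldType.
Variable m : nat.
Local Notation P := {mpoly k[m]}.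
Implicit Types p q : P.

Lemma hX (i : 'I_m) : ('X_i : P) \is 1.-homog.
Proof. by rewrite dhomogX; apply/eqP; apply: mdeg1. Qed.
Lemma hC (a : k) : (a%:MP : P) \is 0.-homog.
Proof. by rewrite -[a%:MP]mulr1 mul_mpolyC; apply: dhomogZ; exact: dhomog1. Qed.
Lemma hM d1 d2 p q : p \is d1.-homog -> q \is d2.-homog -> p * q \is (d1 + d2).-homog.
Proof. exact: dhomogM. Qed.
Lemma hD d1 d2 p q : p \is d1.-homog -> q \is d2.-homog -> d1 = d2 -> p + q \is d1.-homog.
Proof. by move=> ? ? E; subst; apply: dhomogD. Qed.
Lemma hB d1 d2 p q : p \is d1.-homog -> q \is d2.-homog -> d1 = d2 -> p - q \is d1.-homog.
Proof. by move=> ? ? E; subst; apply: dhomogD => //; rewrite dhomogN. Qed.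
Lemma hN d p : p \is d.-homog -> - p \is d.-homog.
Proof. by rewrite dhomogN. Qed.
Lemma hXn d p j : p \is d.-homog -> p ^+ j \is (d * j).-homog.
Proof. exact: dhomogMn. Qed.
Lemma hMn d p j : p \is d.-homog -> p *+ j \is d.-homog.
Proof. move=> H; elim: j => [|j IH]; first by rewrite mulr0n; apply: dhomog0.
by rewrite mulrS; apply: dhomogD. Qed.
Lemma hcast d1 d2 p : p \is d1.-homog -> d1 = d2 -> p \is d2.-homog.
Proof. by move=> ? <-. Qed.
End Hom.

Ltac hom := match goal with
  | |- is_true (in_mem (?a * ?b) _) => eapply hM; [hom|hom]
  | |- is_true (in_mem (?a + ?b) _) => eapply hD; [hom|hom|lia]
  | |- is_true (in_mem (- ?a) _) => eapply hN; hom
  | |- is_true (in_mem (?a ^+ ?j) _) => eapply hXn; hom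
  | |- is_true (in_mem (?a *+ ?j) _) => eapply hMn; hom
  | |- is_true (in_mem (?a%:MP) _) => apply: hC
  | |- _ => first [ eassumption | apply: hX
                  | match goal with H : forall i, is_true (_ \in _) |- _ => apply: H end ]
  end.
Ltac homc := eapply hcast; [hom | try lia].

Section HomGen.
Variable k : fieldType.
Variable n' : nat.
Local Notation m := n'.+3.
Local Notation P := {mpoly k[m]}.
Variable c : k.
Local Notation cc := (c%:MP : P).

Lemma HFe d w (a b : P) (x : 'I_m -> P) i :
  a \is d.-homog -> b \is d.-homog -> (forall i, x i \is w.-homog) ->
  Fe cc a b x i \is (2 * d + w).-homog.
Proof.
move=> Ha Hb Hx; rewrite /Fe /Nrm; case: (val i) => [|[|j]]; homc.
Qed.

Lemma Hge w (x : 'I_m -> P) i : (forall i, x i \is w.-homog) -> ge x i \is (2 * w).-homog.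
Proof. move=> Hx; rewrite /ge; case: (val i) => [|[|[|j]]]; homc. Qed.

Lemma Hgie w (x : 'I_m -> P) i : (forall i, x i \is w.-homog) -> gie x i \is (2 * w).-homog.
Proof. move=> Hx; rewrite /gie; case: (val i) => [|[|[|j]]]; homc. Qed.

Lemma Hqf w (x : 'I_m -> P) : (forall i, x i \is w.-homog) -> qf cc x \is (2 * w).-homog.
Proof. move=> Hx; rewrite /qf; homc. Qed.

Lemma HArec Q w s (x : 'I_m -> P) j : (0 < Q)%N ->
  s \is (2 * w).-homog -> (forall i, x i \is w.-homog) ->
  Arec Q s x j \is (w * (2 * Q ^ j)).-homog.
Proof.
case: Q => // Q' _ Hs Hx; elim: j => [|j IH] /=; first by rewrite expn0; homc.
rewrite expnS; homc.
Qed.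

End HomGen.

Section HomGen2.
Variable k : fieldType.
Variable n' : nat.
Local Notation m := n'.+3.
Local Notation P := {mpoly k[m]}.
Variable c : k.
Local Notation cc := (c%:MP : P).

Lemma HBe Q J w s (x : 'I_m -> P) : (0 < Q)%N ->
  s \is (2 * w).-homog -> (forall i, x i \is w.-homog) ->
  Be Q J s x \is (w * (2 * Q + J)).-homog.
Proof. case: Q => // Q' _ Hs Hx; rewrite /Be; homc. Qed.

Lemma HAe Q w s (x : 'I_m -> P) : (0 < Q)%N ->
  s \is (2 * w).-homog -> (forall i, x i \is w.-homog) ->
  Ae Q s x \is (w * (2 * Q ^ n'.+1) * 2).-homog.
Proof. move=> Q0 Hs Hx; rewrite /Ae; apply: hXn; exact: HArec. Qed.

Lemma HGe D (a be : P) (x : 'I_m -> P) i :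
  a \is D.+1.-homog -> be \is D.-homog -> (forall i, x i \is 1.-homog) ->
  Ge cc a be x i \is (4 * D + 7).-homog.
Proof.
move=> Ha Hb Hx.
have Hg : forall j, gie x j \is 2.-homog by move=> j; apply: (hcast (Hgie _ Hx)).
have Hb' : x (i0 n') * be \is D.+1.-homog by homc.
have H1 : forall j, Fe cc a (x (i0 n') * be) (gie x) j \is (2 * D + 4).-homog.
  by move=> j; apply: (hcast (HFe _ _ Ha Hb' Hg)); lia.
have HF1 : F1e cc a be x \is (2 * D + 3).-homog by rewrite /F1e; homc.
have HF2 : F2e cc a be x \is (2 * D + 3).-homog by rewrite /F2e /Nrm; homc.
rewrite /Ge; case: (val i) => [|[|[|j]]]; homc.
Qed.
End HomGen2.

Section Ext.
Variable n' : nat.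
Local Notation m := n'.+3.
Variable R : comNzRingType.
Implicit Types (c a b s : R) (x y : 'I_m -> R).
Lemma Fe_ext c a b x y i : (forall j, x j = y j) -> Fe c a b x i = Fe c a b y i.
Proof. by move=> H; rewrite /Fe !H. Qed.
Lemma ge_ext x y i : (forall j, x j = y j) -> ge x i = ge y i.
Proof. by move=> H; rewrite /ge !H. Qed.
Lemma gie_ext x y i : (forall j, x j = y j) -> gie x i = gie y i.
Proof. by move=> H; rewrite /gie !H. Qed.
Lemma qf_ext c x y : (forall j, x j = y j) -> qf c x = qf c y.
Proof. by move=> H; rewrite /qf !H. Qed.
Lemma Arec_ext Q s x y j : (forall j, x j = y j) -> Arec Q s x j = Arec Q s y j.
Proof. by move=> H; elim: j => [|j IH] //=; rewrite IH H. Qed.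
Lemma Ae_ext Q s x y : (forall j, x j = y j) -> Ae Q s x = Ae Q s y.
Proof. by move=> H; rewrite /Ae (Arec_ext _ _ _ H). Qed.
Lemma Be_ext Q J s x y : (forall j, x j = y j) -> Be Q J s x = Be Q J s y.
Proof. by move=> H; rewrite /Be H. Qed.
End Ext.

Lemma tnth_comp (k : fieldType) m (F T : ratmap k m) i :
  tnth (comp_map F T) i = tnth F i \mPo T.
Proof. by rewrite tnth_mktuple. Qed.

Lemma compX (k : fieldType) m (T : ratmap k m) i : 'X_i \mPo T = tnth T i.
Proof. by rewrite comp_mpolyXU (tnth_nth 0). Qed.

Lemma nz_eval (k : fieldType) m (p : {mpoly k[m]}) u : p.@[u] != 0 -> p != 0.
Proof. by apply: contraNneq => ->; rewrite meval0. Qed.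

Lemma equiv_id (k : fieldType) m (F : ratmap k m) (M : {mpoly k[m]}) (u : 'I_m -> k) i :
  (forall i, tnth F i = M * 'X_i) -> M.@[u] != 0 -> u i != 0 ->
  equiv_map F (id_map k m).
Proof.
move=> HF Mu ui; split.
- exists i; rewrite HF; apply: (@nz_eval _ _ _ u).
  by rewrite mevalM mevalXU mulf_neq0.
- by exists i; rewrite tnth_mktuple; apply: (@nz_eval _ _ _ u); rewrite mevalXU.
- by move=> a b; rewrite !HF !tnth_mktuple; ring.
Qed.

Ltac ocase n' i := let j := fresh "j" in let Hj := fresh "Hj" in
  case: i => [[|[|[|j]]] Hj];
  [ have -> : Ordinal Hj = i0 n' by apply: val_inj
  | have -> : Ordinal Hj = i1 n' by apply: val_inj
  | have -> : Ordinal Hj = i2 n' by apply: val_inj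
  | idtac ].

Lemma Fe_b0 n' (R : comNzRingType) (c a : R) (x : 'I_n'.+3 -> R) i :
  Fe c a 0 x i = a ^+ 2 * x i.
Proof. ocase n' i; rewrite /Fe /Nrm /=; ring. Qed.

Lemma defined_of (k : fieldType) m (F : ratmap k m) v :
  homog_map F -> kpoint (eval_map F v) -> defined_at F v.
Proof.
move=> HF [i Hi]; have nzF : nonzero_map F by exists i; apply: (nz_eval Hi).
by exists F; split => //; [split => // a b; rewrite mulrC | exists i].
Qed.

Lemma Ge_morph n' (R S : comNzRingType) (phi : {rmorphism R -> S}) c a be
  (x : 'I_n'.+3 -> R) y i : (forall j, phi (x j) = y j) ->
  phi (Ge c a be x i) = Ge (phi c) (phi a) (phi be) y i.
Proof.
move=> H; have Hg : forall j, phi (gie x j) = gie y j by move=> j; apply: gie_morph.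
rewrite /Ge /F1e /F2e; case: (val i) => [|[|[|j]]];
  rewrite ?(Fe_morph _ _ _ _ Hg) ?Nrm_morph; rmo; rewrite ?H ?(Fe_morph _ _ _ _ Hg) ?Nrm_morph; rmo; by rewrite ?H.
Qed.

Lemma Ge_val n' (R : comNzRingType) (c a : R) (x : 'I_n'.+3 -> R) :
  x (i0 n') = 0 -> x (i1 n') = 1 -> x (i2 n') = 1 ->
  Ge c a 1 x (i1 n') - Ge c a 1 x (i2 n') = - a ^+ 3.
Proof.
move=> H0 H1 H2; rewrite /Ge /F1e /F2e /Fe /gie /Nrm /= H0 H1 H2; ring.
Qed.

Section Main.
Variable k : finFieldType.
Variable n' : nat.
Variable c : k.
Hypothesis Hc : forall u : k, u ^+ 2 - u != c.
Local Notation m := n'.+3.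
Local Notation P := {mpoly k[m]}.
Local Notation Q := #|k|.
Local Notation I0 := (i0 n').
Local Notation I1 := (i1 n').
Local Notation I2 := (i2 n').

Definition X : 'I_m -> P := fun i => 'X_i.
Definition cc : P := c%:MP.
Definition ee := (4 * Q ^ n'.+1)%N.
Definition JJ := (ee - 2 * Q)%N.
Definition q0 : P := qf cc X.
Definition AA : P := Ae Q q0 X.
Definition BB : P := Be Q JJ q0 X.
Definition ff : ratmap k m := [tuple Fe cc AA BB X i | i < m].
Definition ffi : ratmap k m := [tuple Fe cc (AA + BB) (- BB) X i | i < m].
Definition gg : ratmap k m := [tuple ge X i | i < m].
Definition ggi : ratmap k m := [tuple gie X i | i < m].

Lemma Q0 : (0 < Q)%N. Proof. exact: ltnW (Q_gt1 k). Qed.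

Lemma ee_gt : (2 * Q < ee)%N.
Proof.
have h1 := Q_gt1 k; have h2 : (0 < Q ^ n')%N by rewrite expn_gt0 Q0.
rewrite /ee expnS; nia.
Qed.

Lemma JJ_ge1 : (1 <= JJ)%N. Proof. have := ee_gt; rewrite /JJ; lia. Qed.
Lemma JJe : (2 * Q + JJ = ee)%N. Proof. have := ee_gt; rewrite /JJ; lia. Qed.

Lemma HXX : forall i, X i \is 1.-homog. Proof. by move=> i; apply: hX. Qed.

Lemma HAA : AA \is ee.-homog.
Proof.
apply: (hcast (HAe Q0 (Hqf c HXX) HXX)).
by rewrite /ee; lia.
Qed.

Lemma HBB : BB \is ee.-homog.
Proof.
apply: (hcast (HBe JJ Q0 (Hqf c HXX) HXX)).
by rewrite mul1n JJe.
Qed.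

Lemma homog_ff : homog_map ff.
Proof. exists (2 * ee + 1)%N => i; rewrite /ff tnth_mktuple. have := HFe c i HAA HBB HXX. move=> H. exact H. Qed.

Lemma homog_ffi : homog_map ffi.
Proof.
exists (2 * ee + 1)%N => i; rewrite /ffi tnth_mktuple.
by apply: (HFe c i _ _ HXX); [apply: hD HAA HBB _ | apply: hN HBB].
Qed.


Lemma comp_FeX (a b : P) (T : ratmap k m) i :
  Fe cc a b X i \mPo T = Fe cc (a \mPo T) (b \mPo T) (tnth T) i.
Proof.
rewrite (@Fe_morph _ _ _ _ _ _ _ _ (tnth T)); last by move=> j; exact: compX.
by rewrite /= comp_mpolyC.
Qed.

Lemma AA_comp (T : ratmap k m) : AA \mPo T = Ae Q (qf cc (tnth T)) (tnth T).
Proof.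
rewrite /AA (@Ae_morph _ _ _ _ _ _ _ (tnth T)); last by move=> j; exact: compX.
congr Ae; rewrite /q0 (@qf_morph _ _ _ _ _ _ (tnth T)); last by move=> j; exact: compX.
by rewrite /= comp_mpolyC.
Qed.

Lemma BB_comp (T : ratmap k m) : BB \mPo T = Be Q JJ (qf cc (tnth T)) (tnth T).
Proof.
rewrite /BB (@Be_morph _ _ _ _ _ _ _ _ (tnth T)); last by move=> j; exact: compX.
congr Be; rewrite /q0 (@qf_morph _ _ _ _ _ _ (tnth T)); last by move=> j; exact: compX.
by rewrite /= comp_mpolyC.
Qed.

Lemma scale_T (a b : P) :
  let T : ratmap k m := [tuple Fe cc a b X i | i < m] in
  AA \mPo T = Nrm cc a b ^+ ee * AA /\ BB \mPo T = Nrm cc a b ^+ ee * BB.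
Proof.
move=> T.
have HT : forall j, tnth T j = Fe cc a b X j by move=> j; rewrite tnth_mktuple.
have Hq : qf cc (tnth T) = Nrm cc a b ^+ 2 * q0.
  by rewrite (qf_ext _ HT) qf_Fe.
split.
- have Hy : forall l, (1 < l)%N -> (l < m)%N -> tnth T (inord l) = Nrm cc a b * X (inord l).
    move=> l l2 lm; rewrite HT Fe_ge2 //.
    by change (1 < nat_of_ord (inord l : 'I_m))%N; rewrite inordK.
  rewrite AA_comp Hq /Ae (@Arec_scale _ _ Q (Nrm cc a b) q0 X (tnth T) n'.+1 Q0 Hy (leqnn _)).
  by rewrite exprMn -exprM /AA /Ae /ee mulnC mulnA.
- have Hy : tnth T I2 = Nrm cc a b * X I2 by rewrite HT.
  by rewrite BB_comp Hq (@Be_scale _ _ Q JJ (Nrm cc a b) q0 X (tnth T) Q0 Hy) JJe.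
Qed.

Definition NN : P := Nrm cc AA BB.
Definition MM : P := (NN ^+ ee) ^+ 2 * NN ^+ 2.

Lemma comp_ffi_ff i : tnth (comp_map ffi ff) i = MM * 'X_i.
Proof.
have [HA HB] := scale_T AA BB.
rewrite tnth_comp tnth_mktuple comp_FeX rmorphD rmorphN /= HA HB.
rewrite (Fe_ext _ _ _ _ (fun j => tnth_mktuple _ j)) Fe_fif.
by rewrite /MM /NN.
Qed.

Lemma comp_ff_ffi i : tnth (comp_map ff ffi) i = MM * 'X_i.
Proof.
have [HA HB] := scale_T (AA + BB) (- BB).
rewrite tnth_comp tnth_mktuple comp_FeX HA HB Nrm_conj.
rewrite (Fe_ext _ _ _ _ (fun j => tnth_mktuple _ j)) Fe_ffi.
by rewrite /MM /NN.
Qed.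


Lemma ev_X (v : 'I_m -> k) j : (X j).@[v] = v j.
Proof. by rewrite /X mevalXU. Qed.

Lemma q0_ev v : q0.@[v] = qf c v.
Proof.
rewrite /q0 (@qf_morph _ _ _ _ _ _ v); last by move=> j; exact: ev_X.
by rewrite /= mevalC.
Qed.

Lemma AA_ev v : AA.@[v] = Ae Q (qf c v) v.
Proof.
rewrite /AA (@Ae_morph _ _ _ _ _ _ _ v); last by move=> j; exact: ev_X.
by rewrite /= -q0_ev.
Qed.

Lemma BB_ev v : BB.@[v] = Be Q JJ (qf c v) v.
Proof.
rewrite /BB (@Be_morph _ _ _ _ _ _ _ _ v); last by move=> j; exact: ev_X.
by rewrite /= -q0_ev.
Qed.

Lemma Fe_ev (a b : P) v i : (Fe cc a b X i).@[v] = Fe c a.@[v] b.@[v] v i.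
Proof.
rewrite (@Fe_morph _ _ _ _ _ _ _ _ v); last by move=> j; exact: ev_X.
by rewrite /= mevalC.
Qed.

Lemma BB_ev0 v : BB.@[v] = 0.
Proof.
rewrite BB_ev /Be; set s := qf c v.
have [->|nz2] := eqVneq (v I2) 0.
  by rewrite expr0n; have := JJ_ge1; case: JJ => //= _ _; rewrite mulr0 mul0r.
have [->|nzs] := eqVneq s 0; first by rewrite !mul0r.
by rewrite !expQ1 ?subrr ?mulr0 // expf_neq0.
Qed.

Lemma AA_ev_nz v : kpoint v -> AA.@[v] != 0.
Proof.
move=> [i Hi]; rewrite AA_ev /Ae expf_neq0 //.
apply/eqP => /Arec_zero [/(qf_aniso Hc) [H0 H1] H].
move: Hi; case: i => [[|[|jj]] Hj].
- have -> : Ordinal Hj = I0 by apply: val_inj.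
  by rewrite H0 eqxx.
- have -> : Ordinal Hj = I1 by apply: val_inj.
  by rewrite H1 eqxx.
have := H jj.+2 isT Hj.
have -> : (inord jj.+2 : 'I_m) = Ordinal Hj by apply: val_inj; rewrite /= inordK.
by move=> ->; rewrite eqxx.
Qed.

Lemma ff_ev v i : (tnth ff i).@[v] = AA.@[v] ^+ 2 * v i.
Proof. by rewrite tnth_mktuple Fe_ev BB_ev0 Fe_b0. Qed.

Lemma ffi_ev v i : (tnth ffi i).@[v] = AA.@[v] ^+ 2 * v i.
Proof. by rewrite tnth_mktuple Fe_ev mevalD mevalN BB_ev0 oppr0 addr0 Fe_b0. Qed.

Lemma MM_ev v : kpoint v -> MM.@[v] != 0.
Proof.
move=> kv; have nzA := AA_ev_nz kv.
have HN : NN.@[v] = AA.@[v] ^+ 2.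
  rewrite /NN (@Nrm_morph _ _ (meval v)) /= mevalC BB_ev0 /Nrm; ring.
by rewrite /MM mevalM !rmorphXn /= HN mulf_neq0 // !expf_neq0.
Qed.

Definition ones : 'I_m -> k := fun _ => 1.
Lemma kp_ones : kpoint ones. Proof. by exists I0; rewrite /ones oner_eq0. Qed.

Lemma birational_ff : birational ff.
Proof.
split; first exact: homog_ff.
exists ffi; split; first exact: homog_ffi.
- apply: (equiv_id (u := ones) (i := I0) comp_ffi_ff (MM_ev kp_ones)).
  by rewrite /ones oner_eq0.
- apply: (equiv_id (u := ones) (i := I0) comp_ff_ffi (MM_ev kp_ones)).
  by rewrite /ones oner_eq0.
Qed.

Lemma is_inverse_ffi : is_inverse ff ffi.
Proof. by case: birational_ff => _ _; split; [exact: homog_ffi | apply: (equiv_id (u := ones) (i := I0) comp_ffi_ff (MM_ev kp_ones)); rewrite /ones oner_eq0 | apply: (equiv_id (u := ones) (i := I0) comp_ff_ffi (MM_ev kp_ones)); rewrite /ones oner_eq0]. Qed.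

Lemma kp_scale (F : ratmap k m) v : kpoint v ->
  (forall i, (tnth F i).@[v] = AA.@[v] ^+ 2 * v i) -> kpoint (eval_map F v).
Proof.
move=> kv HF; case: (kv) => i Hi; exists i; rewrite /eval_map HF.
by rewrite mulf_neq0 // expf_neq0 // AA_ev_nz.
Qed.

Lemma kernel_ff : in_BCr_kernel ff.
Proof.
split; first split.
- exact: birational_ff.
- by move=> v kv; apply: defined_of homog_ff (kp_scale kv (ff_ev v)).
- exists ffi; split; first exact: is_inverse_ffi.
  by move=> v kv; apply: defined_of homog_ffi (kp_scale kv (ffi_ev v)).
- move=> v kv G HG [_ _ Hx] _ i j; rewrite /eval_map.
  have := congr1 (meval v) (Hx i j); rewrite !mevalM !ff_ev.
  set a := AA.@[v] ^+ 2; have nza : a != 0 by rewrite expf_neq0 // AA_ev_nz.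
  move=> E.
  have : a * ((tnth G i).@[v] * v j - (tnth G j).@[v] * v i) =
         a * v j * (tnth G i).@[v] - a * v i * (tnth G j).@[v] by ring.
  rewrite -E subrr => /eqP; rewrite mulf_eq0 (negbTE nza) /= subr_eq0 => /eqP //.
Qed.


Lemma homog_gg : homog_map gg.
Proof. exists 2%N => i; rewrite tnth_mktuple; have := Hge i HXX; move=> H; exact H. Qed.

Lemma homog_ggi : homog_map ggi.
Proof. exists 2%N => i; rewrite tnth_mktuple; have := Hgie i HXX; move=> H; exact H. Qed.

Lemma comp_ggi_gg i : tnth (comp_map ggi gg) i = (X I0 * X I1 * (X I2 - X I0)) * 'X_i.
Proof.
rewrite tnth_comp tnth_mktuple (@gie_morph _ _ _ _ _ (tnth gg)); last by move=> j; exact: compX.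
by rewrite (gie_ext _ (fun j => tnth_mktuple _ j)) gie_ge.
Qed.

Lemma comp_gg_ggi i : tnth (comp_map gg ggi) i = (X I0 * X I1 * X I2) * 'X_i.
Proof.
rewrite tnth_comp tnth_mktuple (@ge_morph _ _ _ _ _ (tnth ggi)); last by move=> j; exact: compX.
by rewrite (ge_ext _ (fun j => tnth_mktuple _ j)) ge_gie.
Qed.

Definition uu : 'I_m -> k := fun i => if val i == 2%N then 0 else 1.

Lemma is_inverse_gg : is_inverse gg ggi.
Proof.
split; first exact: homog_ggi.
- apply: (equiv_id (u := uu) (i := I0) comp_ggi_gg); last by rewrite /uu /= oner_eq0.
  by rewrite !mevalM mevalB !ev_X /uu /= !mul1r add0r oppr_eq0 oner_eq0.
- apply: (equiv_id (u := ones) (i := I0) comp_gg_ggi); last by rewrite /ones oner_eq0.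
  by rewrite !mevalM !ev_X /ones !mul1r oner_eq0.
Qed.

Lemma birational_gg : birational gg.
Proof. by split; [exact: homog_gg | exists ggi; exact: is_inverse_gg]. Qed.

Definition hh := comp_map gg (comp_map ff ggi).
Definition As : P := AA \mPo ggi.
Definition ap : P := qf cc (gie X).
Definition sp : P := gie X I2.
Definition SS : P := \sum_(i < Q.-1) ap ^+ (Q.-1.-1 - i) * (sp ^+ 2) ^+ i.
Definition be : P := ap * sp ^+ JJ * del cc X * SS.
Definition GG : ratmap k m := [tuple Ge cc As be X i | i < m].

Lemma tnth_ggi j : tnth ggi j = gie X j. Proof. exact: tnth_mktuple. Qed.

Lemma Bs_eq : BB \mPo ggi = X I0 * be.
Proof.
rewrite BB_comp (Be_ext _ _ _ tnth_ggi) (qf_ext _ tnth_ggi) -/ap /Be -/sp.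
have E : ap - sp ^+ 2 = X I0 * del cc X := qf_gie_del cc X.
rewrite subrXX E /be /SS; ring.
Qed.

Lemma hh_eq i : tnth hh i = X I0 * tnth GG i.
Proof.
rewrite /hh tnth_comp tnth_mktuple (@ge_morph _ _ _ _ _ (tnth (comp_map ff ggi))); last first.
  by move=> j; exact: compX.
have E : forall j, tnth (comp_map ff ggi) j = Fe cc As (X I0 * be) (gie X) j.
  move=> j; rewrite tnth_comp tnth_mktuple comp_FeX -Bs_eq.
  exact: Fe_ext tnth_ggi.
by rewrite (ge_ext _ E) ge_Ge tnth_mktuple.
Qed.


Lemma Hg2 : forall i, gie X i \is 2.-homog.
Proof. by move=> i; have := Hgie i HXX; move=> H; exact H. Qed.

Lemma As_eq : As = Ae Q (qf cc (gie X)) (gie X).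
Proof. by rewrite /As AA_comp (Ae_ext _ _ tnth_ggi) (qf_ext _ tnth_ggi). Qed.

Lemma HAs : As \is (2 * ee).-homog.
Proof.
rewrite As_eq; have H := HAe Q0 (Hqf c Hg2) Hg2.
apply: (hcast H); rewrite /ee; lia.
Qed.

Lemma Hbe : be \is (2 * ee).-1.-homog.
Proof.
have Hap : ap \is 4.-homog by apply: (hcast (Hqf c Hg2)).
have Hsp : sp \is 2.-homog by apply: Hg2.
have Hdel : del cc X \is 3.-homog.
  have H0 := HXX I0; have H1 := HXX I1; have H2 := HXX I2.
  have Hcc : cc \is 0.-homog by apply: hC.
  rewrite /del; homc.
have HS : SS \is (4 * Q.-1.-1).-homog.
  rewrite /SS; apply: (big_ind (fun p : P => p \is (4 * Q.-1.-1).-homog)).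
  - exact: dhomog0.
  - by move=> p q Hp Hq; apply: dhomogD.
  - move=> i _; have Hi := ltn_ord i; homc.
have h1 := Q_gt1 k; have h2 := JJe.
rewrite /be; homc.
Qed.

Lemma homog_GG : homog_map GG.
Proof.
exists (4 * (2 * ee).-1 + 7)%N => i; rewrite tnth_mktuple.
have E : ((2 * ee).-1.+1 = 2 * ee)%N by have := ee_gt; lia.
have HA : As \is (2 * ee).-1.+1.-homog by rewrite E; exact: HAs.
have := HGe c i HA Hbe HXX; move=> H; exact H.
Qed.

Definition vv : 'I_m -> k := fun i => if (val i == 1%N) || (val i == 2%N) then 1 else 0.

Lemma kp_vv : kpoint vv. Proof. by exists I1; rewrite /vv /= oner_eq0. Qed.

Lemma gie_ev j : (gie X j).@[vv] = gie vv j.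
Proof. by rewrite (@gie_morph _ _ _ _ _ vv) // => l; exact: ev_X. Qed.

Lemma qf_gie_vv : qf c (gie vv) = 1.
Proof. rewrite /qf /gie /vv /=; ring. Qed.

Lemma As_ev : As.@[vv] = Ae Q 1 (gie vv).
Proof.
rewrite As_eq (@Ae_morph _ _ _ _ _ _ _ (gie vv)); last exact: gie_ev.
congr Ae; rewrite (@qf_morph _ _ _ _ _ _ (gie vv)); last exact: gie_ev.
by rewrite /= mevalC qf_gie_vv.
Qed.

Lemma As_ev_nz : As.@[vv] != 0.
Proof.
rewrite As_ev /Ae expf_neq0 //; apply/eqP => /Arec_zero [/eqP]; by rewrite oner_eq0.
Qed.

Lemma Qm1 : ((Q.-1)%:R : k) = -1.
Proof.
apply/eqP; rewrite -subr_eq0 opprK; apply/eqP.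
by rewrite -Qk0 -{2}(prednK Q0) mulrSr.
Qed.

Lemma be_ev : be.@[vv] = 1.
Proof.
have Hap : ap.@[vv] = 1.
  rewrite /ap (@qf_morph _ _ _ _ _ _ (gie vv)); last exact: gie_ev.
  by rewrite /= mevalC qf_gie_vv.
have Hsp : sp.@[vv] = 1 by rewrite /sp gie_ev /gie /vv /=; ring.
have Hdel : (del cc X).@[vv] = -1.
  rewrite /del; rmo; rewrite /= !ev_X mevalC /vv /=; ring.
have HS : SS.@[vv] = -1.
  rewrite /SS rmorph_sum /=.
  rewrite (eq_bigr (fun _ => 1)); last first.
    by move=> i _; rewrite mevalM !rmorphXn /= Hap Hsp !expr1n mulr1.
  by rewrite sumr_const card_ord Qm1.
rewrite /be !mevalM rmorphXn /= Hap Hsp Hdel HS expr1n; ring.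
Qed.

Lemma GG_ev i : (tnth GG i).@[vv] = Ge c As.@[vv] 1 vv i.
Proof.
rewrite tnth_mktuple (@Ge_morph _ _ _ _ _ _ _ _ vv); last exact: ev_X.
by rewrite /= mevalC be_ev.
Qed.

Lemma not_kernel_hh : ~ in_BCr_kernel hh.
Proof.
move=> [_ Hfix].
set a := As.@[vv]; have nza : a != 0 := As_ev_nz.
have Hdiff : (tnth GG I1).@[vv] - (tnth GG I2).@[vv] = - a ^+ 3.
  by rewrite !GG_ev Ge_val.
have [i [Hi1 Hi2]] : exists i, (tnth GG i).@[vv] != 0 /\ (i = I1 \/ i = I2).
  have [E|E] := eqVneq (tnth GG I1).@[vv] 0; last by exists I1; split => //; left.
  exists I2; split; last by right.
  apply/eqP => E2; move: Hdiff; rewrite E E2 subrr => /eqP; rewrite eq_sym oppr_eq0.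
  by rewrite expf_eq0 (negbTE nza) andbF.
have nzG : tnth GG i != 0 := nz_eval Hi1.
have nzX : X I0 != 0 by apply: (@nz_eval _ _ _ ones); rewrite ev_X /ones oner_eq0.
have Heq : equiv_map hh GG.
  split; [exists i; rewrite hh_eq; exact: mulf_neq0 | exists i; exact: nzG |].
  by move=> p q; rewrite !hh_eq; ring.
have K : kpoint (eval_map GG vv) by exists i.
have := Hfix vv kp_vv GG homog_GG Heq K I1 I2; rewrite /eval_map.
have -> : vv I1 = 1 by [].
have -> : vv I2 = 1 by [].
rewrite !mulr1 => E; move: Hdiff; rewrite E subrr => /eqP; rewrite eq_sym oppr_eq0.
by rewrite expf_eq0 (negbTE nza) andbF.
Qed.

End Main.

Theorem proposition4p18 (k : finFieldType) (n : nat) (hn : (2 <= n)%N) :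
  exists (f g gi : ratmap k n.+1),
    [/\ in_BCr_kernel f, birational g, is_inverse g gi &
        ~ in_BCr_kernel (comp_map g (comp_map f gi))].
Proof.
case: n hn => [|[|n']] // _.
have [c Hc] := exists_aniso k.
exists (ff n' c), (gg k n'), (ggi k n'); split.
- exact (@kernel_ff k n' c Hc).
- exact: birational_gg.
- exact: is_inverse_gg.
- exact (@not_kernel_hh k n' c).
Qed.
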